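(* For a multi-parameter family $\rho(\theta)=\sum_{k=1}^d p_k(\theta)|w_k(\theta)\rangle\langle w_k(\theta)|$ with a chosen smooth spectral decomposition as in the context, at every $\theta$ one has the matrix inequality $$H_{SLD}(\theta)\le C_L(\theta),$$ i.e. $v^TH_{SLD}(\theta)v\le v^TC_L(\theta)v$ for all $v\in\mathbb{R}^p$.
   Context: Let $\Theta\subseteq\mathbb{R}^p$ be open and $\rho(\theta)=\sum_{k=1}^d p_k(\theta)|w_k(\theta)\rangle\langle w_k(\theta)|$, where $p_k:\Theta\to[0,1]$ are smooth with $\sum_k p_k=1$ and $|w_1(\theta)\rangle,\dots,|w_d(\theta)\rangle$ is an orthonormal basis of $\mathbb{C}^d$ depending smoothly on $\theta$. Write $|w_k^{(l)}\rangle=\frac{\partial}{\partial\theta^l}|w_k(\theta)\rangle$. Convention: indices $i$ with $p_i(\theta)=0$ are omitted from sums containing $1/p_i$. The $C_L$ quantum information is the $p\times p$ matrix $$C_L(\theta)_{kl}=\sum_i\frac{1}{p_i}\frac{\partial p_i}{\partial\theta^k}\frac{\partial p_i}{\partial\theta^l}+4\,\Re\sum_{i<j}(p_i+p_j)\langle w_i^{(k)}|w_j\rangle\langle w_j|w_i^{(l)}\rangle.$$ The SLD quantum information matrix is $H_{SLD}(\theta)_{kl}=\Re\,\mathrm{tr}\{\rho(\theta)\lambda_k(\theta)\lambda_l(\theta)\}$, where $\lambda_k(\theta)$ is any Hermitian solution of $\frac{\partial\rho}{\partial\theta^k}=\frac12(\rho\lambda_k+\lambda_k\rho)$. For symmetric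 matrices, $A\le B$ means $B-A$ is positive semidefinite. *)

(* Defs.v *)
(* Complex numbers are
   modelled as pairs of reals, vectors of C^d as nat -> C (only indices < d
   matter), matrices as nat -> nat -> C, parameters theta in R^p as nat -> R
   (only coordinates < p matter). *)
From Stdlib Require Import Reals Lra.
Open Scope R_scope.

Definition C := (R * R)%type.
Definition Cre (z : C) : R := fst z.
Definition Cim (z : C) : R := snd z.
Definition Czero : C := (0, 0).
Definition Cone : C := (1, 0).
Definition RtoC (r : R) : C := (r, 0).
Definition Cadd (z u : C) : C := (fst z + fst u, snd z + snd u).
Definition Cmul (z u : C) : C :=
  (fst z * fst u - snd z * snd u, fst z * snd u + snd z * fst u).
Definition Cconj (z : C) : C := (fst z, - snd z).

Fixpoint Csum (n : nat) (f : nat -> C) : C :=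
  match n with O => Czero | S m => Cadd (Csum m f) (f m) end.
Fixpoint Rsum (n : nat) (f : nat -> R) : R :=
  match n with O => 0 | S m => Rsum m f + f m end.

Definition Vec := nat -> C.
Definition Mat := nat -> nat -> C.

Definition inner (d : nat) (a b : Vec) : C :=
  Csum d (fun m => Cmul (Cconj (a m)) (b m)).
Definition outer (a b : Vec) : Mat := fun i j => Cmul (a i) (Cconj (b j)).
Definition mmul (d : nat) (A B : Mat) : Mat :=
  fun i j => Csum d (fun m => Cmul (A i m) (B m j)).
Definition mtrace (d : nat) (A : Mat) : C := Csum d (fun i => A i i).
Definition hermitian (d : nat) (A : Mat) : Prop :=
  forall i j, (i < d)%nat -> (j < d)%nat -> A j i = Cconj (A i j).

Definition Pt := nat -> R.
Definition shift (x : Pt) (l : nat) (t : R) : Pt :=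
  fun i => if Nat.eqb i l then x i + t else x i.
Definition near (p : nat) (x : Pt) (delta : R) (y : Pt) : Prop :=
  forall i, (i < p)%nat -> Rabs (y i - x i) < delta.
Definition is_open (p : nat) (Theta : Pt -> Prop) : Prop :=
  forall x, Theta x -> exists delta, 0 < delta /\
    forall y, near p x delta y -> Theta y.
Definition continuous_on (p : nat) (Theta : Pt -> Prop) (f : Pt -> R) : Prop :=
  forall x, Theta x -> forall eps, 0 < eps -> exists delta, 0 < delta /\
    forall y, Theta y -> near p x delta y -> Rabs (f y - f x) < eps.
Definition partial_at (f : Pt -> R) (l : nat) (x : Pt) (v : R) : Prop :=
  derivable_pt_lim (fun t => f (shift x l t)) 0 v.
Definition partialC_at (f : Pt -> C) (l : nat) (x : Pt) (v : C) : Prop :=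
  partial_at (fun y => Cre (f y)) l x (Cre v) /\
  partial_at (fun y => Cim (f y)) l x (Cim v).

Fixpoint Ck (p : nat) (Theta : Pt -> Prop) (n : nat) (f : Pt -> R) : Prop :=
  match n with
  | O => continuous_on p Theta f
  | S m => continuous_on p Theta f /\
      forall l, (l < p)%nat -> exists g : Pt -> R,
        (forall x, Theta x -> partial_at f l x (g x)) /\ Ck p Theta m g
  end.
Definition smooth (p : nat) (Theta : Pt -> Prop) (f : Pt -> R) : Prop :=
  forall n, Ck p Theta n f.
Definition smoothC (p : nat) (Theta : Pt -> Prop) (f : Pt -> C) : Prop :=
  smooth p Theta (fun y => Cre (f y)) /\ smooth p Theta (fun y => Cim (f y)).

Definition rho (d : nat) (P : nat -> Pt -> R) (w : nat -> Pt -> Vec) (x : Pt) : Mat :=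
  fun i j => Csum d (fun k => Cmul (RtoC (P k x)) (outer (w k x) (w k x) i j)).

(* C_L(theta)_{kl}, given the partial derivatives dP i k = d p_i / d theta^k
   and dw i k = |w_i^{(k)}> at theta; terms with p_i = 0 are omitted. *)
Definition CL (d : nat) (P : nat -> Pt -> R) (w : nat -> Pt -> Vec) (x : Pt)
    (dP : nat -> nat -> R) (dw : nat -> nat -> Vec) (k l : nat) : R :=
  Rsum d (fun i => if Req_EM_T (P i x) 0 then 0 else / P i x * dP i k * dP i l)
  + 4 * Cre (Csum d (fun j => Csum j (fun i =>
          Cmul (RtoC (P i x + P j x))
               (Cmul (inner d (dw i k) (w j x)) (inner d (w j x) (dw i l)))))).

Definition HSLD (d : nat) (P : nat -> Pt -> R) (w : nat -> Pt -> Vec) (x : Pt)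
    (lam : nat -> Mat) (k l : nat) : R :=
  Cre (mtrace d (mmul d (mmul d (rho d P w x) (lam k)) (lam l))).

Definition quad (p : nat) (M : nat -> nat -> R) (v : nat -> R) : R :=
  Rsum p (fun k => Rsum p (fun l => v k * v l * M k l)).

(* Main.v *)
Require Import Defs.
From Stdlib Require Import Reals Lra Lia Psatz FunctionalExtensionality.
Import Defs.
Open Scope R_scope.

Ltac Csolve := unfold Cadd, Cmul, Cconj, RtoC, Czero, Cone, Cre, Cim in *;
  apply injective_projections; simpl; ring.

Lemma Csum_ext n f g : (forall i, (i < n)%nat -> f i = g i) -> Csum n f = Csum n g.
Proof. induction n; simpl; intros H; auto. rewrite IHn by (intros; apply H; lia). rewrite (H n) by lia. auto. Qed.
Lemma Rsum_ext n f g : (forall i, (i < n)%nat -> f i = g i) -> Rsum n f = Rsum n g.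
Proof. induction n; simpl; intros H; auto. rewrite IHn by (intros; apply H; lia). rewrite (H n) by lia. auto. Qed.
Lemma Csum_add n f g : Csum n (fun i => Cadd (f i) (g i)) = Cadd (Csum n f) (Csum n g).
Proof. induction n; simpl. Csolve. rewrite IHn. Csolve. Qed.
Lemma Csum_mull n c f : Csum n (fun i => Cmul c (f i)) = Cmul c (Csum n f).
Proof. induction n; simpl. Csolve. rewrite IHn. Csolve. Qed.
Lemma Csum_mulr n c f : Csum n (fun i => Cmul (f i) c) = Cmul (Csum n f) c.
Proof. induction n; simpl. Csolve. rewrite IHn. Csolve. Qed.
Lemma Csum_zero n f : (forall i, (i < n)%nat -> f i = Czero) -> Csum n f = Czero.
Proof. induction n; simpl; intros H; auto. rewrite IHn by (intros; apply H; lia). rewrite H by lia. Csolve. Qed.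
Lemma Csum_swap n m f : Csum n (fun i => Csum m (fun j => f i j)) = Csum m (fun j => Csum n (fun i => f i j)).
Proof. induction n; simpl. symmetry; apply Csum_zero; auto.
  rewrite IHn. rewrite <- Csum_add. reflexivity. Qed.
Lemma Csum_conj n f : Cconj (Csum n f) = Csum n (fun i => Cconj (f i)).
Proof. induction n; simpl. Csolve. rewrite <- IHn. Csolve. Qed.
Lemma Cre_sum n f : Cre (Csum n f) = Rsum n (fun i => Cre (f i)).
Proof. induction n; simpl; auto. rewrite <- IHn. reflexivity. Qed.
Lemma Cim_sum n f : Cim (Csum n f) = Rsum n (fun i => Cim (f i)).
Proof. induction n; simpl; auto. rewrite <- IHn. reflexivity. Qed.

Definition delta (a b : nat) : C := if Nat.eqb a b then Cone else Czero.

Lemma Csum_delta_l n a f : (a < n)%nat -> Csum n (fun b => Cmul (delta a b) (f b)) = f a.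
Proof. induction n; intros H; [lia|]. simpl. destruct (Nat.eq_dec a n).
  - subst. rewrite Csum_zero. unfold delta; rewrite Nat.eqb_refl; Csolve.
    intros i Hi. unfold delta. destruct (Nat.eqb_spec n i); [lia|]. Csolve.
  - rewrite IHn by lia. unfold delta. destruct (Nat.eqb_spec a n); [lia|]. Csolve. Qed.
Lemma Csum_delta_r n a f : (a < n)%nat -> Csum n (fun b => Cmul (delta b a) (f b)) = f a.
Proof. intros H. rewrite <- (Csum_delta_l n a f H). apply Csum_ext. intros i _.
  unfold delta. rewrite Nat.eqb_sym. auto. Qed.

Lemma Rsum_add n f g : Rsum n (fun i => f i + g i) = Rsum n f + Rsum n g.
Proof. induction n; simpl. ring. rewrite IHn. ring. Qed.
Lemma Rsum_mull n c f : Rsum n (fun i => c * f i) = c * Rsum n f.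
Proof. induction n; simpl. ring. rewrite IHn. ring. Qed.
Lemma Rsum_zero n f : (forall i, (i < n)%nat -> f i = 0) -> Rsum n f = 0.
Proof. induction n; simpl; intros H; auto. rewrite IHn by (intros; apply H; lia). rewrite H by lia. ring. Qed.
Lemma Rsum_swap n m f : Rsum n (fun i => Rsum m (fun j => f i j)) = Rsum m (fun j => Rsum n (fun i => f i j)).
Proof. induction n; simpl. symmetry; apply Rsum_zero; auto.
  rewrite IHn. rewrite <- Rsum_add. reflexivity. Qed.
Lemma Rsum_le n f g : (forall i, (i < n)%nat -> f i <= g i) -> Rsum n f <= Rsum n g.
Proof. induction n; simpl; intros H. lra. pose proof (H n ltac:(lia)). pose proof (IHn ltac:(intros; apply H; lia)). lra. Qed.
Lemma Rsum_nonneg n f : (forall i, (i < n)%nat -> 0 <= f i) -> 0 <= Rsum n f.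
Proof. intros H. replace 0 with (Rsum n (fun _ => 0)). apply Rsum_le; auto. apply Rsum_zero; auto. Qed.
Lemma Rsum_zero_inv n f : (forall i, (i < n)%nat -> 0 <= f i) -> Rsum n f = 0 -> forall i, (i < n)%nat -> f i = 0.
Proof. induction n; simpl; intros H Hs i Hi; [lia|].
  assert (0 <= Rsum n f) by (apply Rsum_nonneg; intros; apply H; lia).
  pose proof (H n ltac:(lia)).
  destruct (Nat.eq_dec i n). subst; lra. apply IHn; [intros; apply H; lia|lra|lia]. Qed.

Lemma Rsum_split n f : Rsum n (fun i => Rsum n (fun j => f i j)) =
  Rsum n (fun i => f i i) + Rsum n (fun j => Rsum j (fun i => f i j + f j i)).
Proof. induction n; simpl. ring.
  rewrite Rsum_add. rewrite Rsum_add. rewrite IHn. replace (Rsum n (fun j => f n j)) with (Rsum n (f n)) by reflexivity. ring. Qed.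

Definition app (d : nat) (A : Mat) (u : Vec) : Vec := fun a => Csum d (fun b => Cmul (A a b) (u b)).

Lemma conj_inner d y z : Cconj (inner d y z) = inner d z y.
Proof. unfold inner. rewrite Csum_conj. apply Csum_ext; intros. Csolve. Qed.
Lemma inner_ext d y y' z z' : (forall m, (m < d)%nat -> y m = y' m) -> (forall m, (m < d)%nat -> z m = z' m) -> inner d y z = inner d y' z'.
Proof. intros H1 H2. unfold inner. apply Csum_ext; intros. rewrite H1, H2; auto. Qed.
Lemma inner_scal_r d y c z : inner d y (fun m => Cmul c (z m)) = Cmul c (inner d y z).
Proof. unfold inner. rewrite <- Csum_mull. apply Csum_ext; intros; Csolve. Qed.
Lemma inner_scal_l d r y z : inner d (fun m => Cmul (RtoC r) (y m)) z = Cmul (RtoC r) (inner d y z).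
Proof. unfold inner. rewrite <- Csum_mull. apply Csum_ext; intros; Csolve. Qed.
Lemma inner_add_r d y z z' : inner d y (fun m => Cadd (z m) (z' m)) = Cadd (inner d y z) (inner d y z').
Proof. unfold inner. rewrite <- Csum_add. apply Csum_ext; intros; Csolve. Qed.

Lemma inner_app_herm d A y z : hermitian d A -> inner d (app d A y) z = inner d y (app d A z).
Proof. intros H. unfold inner, app.
  transitivity (Csum d (fun m => Csum d (fun b => Cmul (Cconj (y b)) (Cmul (A b m) (z m))))).
  - apply Csum_ext; intros m Hm. rewrite Csum_conj, <- Csum_mulr. apply Csum_ext; intros b Hb.
    rewrite (H m b) by auto. Csolve.
  - rewrite Csum_swap. apply Csum_ext; intros b Hb. rewrite <- Csum_mull. apply Csum_ext; intros; Csolve. Qed.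

Lemma app_mmul d A B u a : app d (mmul d A B) u a = app d A (app d B u) a.
Proof. unfold app, mmul.
  transitivity (Csum d (fun b => Csum d (fun m => Cmul (A a m) (Cmul (B m b) (u b))))).
  - apply Csum_ext; intros. rewrite <- Csum_mulr. apply Csum_ext; intros; Csolve.
  - rewrite Csum_swap. apply Csum_ext; intros. rewrite <- Csum_mull. reflexivity. Qed.

Lemma mmul_assoc d A B E i j : mmul d (mmul d A B) E i j = mmul d A (mmul d B E) i j.
Proof. unfold mmul.
  transitivity (Csum d (fun m => Csum d (fun b => Cmul (A i b) (Cmul (B b m) (E m j))))).
  - apply Csum_ext; intros. rewrite <- Csum_mulr. apply Csum_ext; intros; Csolve.
  - rewrite Csum_swap. apply Csum_ext; intros. rewrite <- Csum_mull. reflexivity. Qed.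

Section Rho.
Variable d : nat.
Variable pr : nat -> R.
Variable W : nat -> Vec.
Definition rh : Mat := fun a b => Csum d (fun n => Cmul (RtoC (pr n)) (outer (W n) (W n) a b)).

Lemma rh_herm : hermitian d rh.
Proof. intros i j _ _. unfold rh. rewrite Csum_conj. apply Csum_ext; intros. unfold outer. Csolve. Qed.

Lemma app_rh u m : app d rh u m = Csum d (fun n => Cmul (RtoC (pr n)) (Cmul (inner d (W n) u) (W n m))).
Proof. unfold app, rh, inner.
  transitivity (Csum d (fun b => Csum d (fun n => Cmul (Cmul (RtoC (pr n)) (W n m)) (Cmul (Cconj (W n b)) (u b))))).
  - apply Csum_ext; intros. rewrite <- Csum_mulr. apply Csum_ext; intros. unfold outer. Csolve.
  - rewrite Csum_swap. apply Csum_ext; intros. rewrite Csum_mull. Csolve. Qed.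

Hypothesis Hon : forall i j, (i < d)%nat -> (j < d)%nat -> inner d (W i) (W j) = delta i j.

Lemma app_rh_w i m : (i < d)%nat -> app d rh (W i) m = Cmul (RtoC (pr i)) (W i m).
Proof. intros Hi. rewrite app_rh.
  rewrite <- (Csum_delta_r d i (fun n => Cmul (RtoC (pr n)) (W n m)) Hi).
  apply Csum_ext; intros n Hn. rewrite Hon by auto. Csolve. Qed.

Lemma trace_rh M : mtrace d (mmul d rh M) = Csum d (fun i => Cmul (RtoC (pr i)) (inner d (W i) (app d M (W i)))).
Proof. unfold mtrace, mmul, rh, inner, app, outer.
  transitivity (Csum d (fun a => Csum d (fun b => Csum d (fun n =>
     Cmul (RtoC (pr n)) (Cmul (Cconj (W n b)) (Cmul (M b a) (W n a))))))).
  - apply Csum_ext; intros a _. apply Csum_ext; intros b _. rewrite <- Csum_mulr.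
    apply Csum_ext; intros; Csolve.
  - rewrite Csum_swap. 
    transitivity (Csum d (fun b => Csum d (fun n => Csum d (fun a =>
     Cmul (RtoC (pr n)) (Cmul (Cconj (W n b)) (Cmul (M b a) (W n a))))))).
    + apply Csum_ext; intros. apply Csum_swap.
    + rewrite Csum_swap. apply Csum_ext; intros n _. rewrite <- Csum_mull.
      apply Csum_ext; intros b _. rewrite <- Csum_mull. rewrite <- Csum_mull. apply Csum_ext; intros; Csolve. Qed.
End Rho.

Section Compl.
Variable d : nat.
Variable W : nat -> Vec.
Hypothesis Hon : forall i j, (i < d)%nat -> (j < d)%nat -> inner d (W i) (W j) = delta i j.
Definition G a b := Csum d (fun i => Cmul (W i a) (Cconj (W i b))).

Lemma G2 a c : Csum d (fun b => Cmul (G a b) (G b c)) = G a c.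
Proof. unfold G.
  transitivity (Csum d (fun b => Csum d (fun i => Csum d (fun j =>
    Cmul (Cmul (W i a) (Cconj (W j c))) (Cmul (Cconj (W i b)) (W j b)))))).
  - apply Csum_ext; intros b _. rewrite <- Csum_mulr. apply Csum_ext; intros i _.
    rewrite <- Csum_mull. apply Csum_ext; intros; Csolve.
  - rewrite Csum_swap. apply Csum_ext; intros i Hi. rewrite Csum_swap.
    transitivity (Csum d (fun j => Cmul (delta j i) (Cmul (W j a) (Cconj (W i c))))).
    2:{ rewrite Csum_delta_r by auto. Csolve. }
    apply Csum_ext; intros j Hj. rewrite Csum_mull.
    change (Csum d (fun b => Cmul (Cconj (W i b)) (W j b))) with (inner d (W i) (W j)).
    rewrite Hon by auto. unfold delta. rewrite Nat.eqb_sym. destruct (Nat.eqb j i) eqn:E.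
    apply Nat.eqb_eq in E; subst. Csolve. Csolve. Qed.

Lemma G_herm a b : Cconj (G a b) = G b a.
Proof. unfold G. rewrite Csum_conj. apply Csum_ext; intros; Csolve. Qed.

Definition E a b := Cadd (delta a b) (Cmul (RtoC (-1)) (G a b)).

Lemma delta_sym a b : delta a b = delta b a.
Proof. unfold delta. rewrite Nat.eqb_sym. auto. Qed.
Lemma delta_conj a b : Cconj (delta a b) = delta a b.
Proof. unfold delta. destruct (Nat.eqb a b); Csolve. Qed.

Lemma E_row a : (a < d)%nat -> Csum d (fun b => Cmul (E a b) (E b a)) = Cadd (delta a a) (Cmul (RtoC (-1)) (G a a)).
Proof. intros Ha.
  transitivity (Csum d (fun b => Cadd (Cadd (Cmul (delta a b) (delta b a)) (Cmul (RtoC (-1)) (Cmul (delta a b) (G b a))))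
     (Cadd (Cmul (RtoC (-1)) (Cmul (delta b a) (G a b))) (Cmul (G a b) (G b a))))).
  - apply Csum_ext; intros. unfold E. Csolve.
  - rewrite !Csum_add, !Csum_mull, G2, !Csum_delta_l, Csum_delta_r by auto. Csolve. Qed.

Lemma complete a b : (a < d)%nat -> (b < d)%nat -> G a b = delta a b.
Proof. intros Ha Hb.
  set (f := fun a b => Cre (E a b) * Cre (E a b) + Cim (E a b) * Cim (E a b)).
  assert (Hs : Rsum d (fun a => Rsum d (fun b => f a b)) = 0).
  { transitivity (Cre (Csum d (fun a => Csum d (fun b => Cmul (E a b) (E b a))))).
    - rewrite Cre_sum. apply Rsum_ext; intros a' Ha'. rewrite Cre_sum. apply Rsum_ext; intros b' Hb'.
      assert (Cconj (E a' b') = E b' a').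
      { unfold E. rewrite <- (G_herm a' b'), (delta_sym b' a'). unfold delta. destruct (Nat.eqb a' b'); Csolve. }
      rewrite <- H. unfold f. unfold Cre, Cim, Cmul, Cconj. simpl. ring.
    - rewrite (Csum_ext d _ (fun a => Cadd (delta a a) (Cmul (RtoC (-1)) (G a a)))) by (intros; apply E_row; auto).
      rewrite Csum_add, Csum_mull.
      assert (HG : Csum d (fun a => G a a) = Csum d (fun a => delta a a)).
      { unfold G. rewrite Csum_swap. apply Csum_ext; intros i Hi. rewrite <- (Hon i i) by auto.
        unfold inner. apply Csum_ext; intros; Csolve. }
      rewrite HG. unfold Cre, Cadd, Cmul, RtoC. simpl. ring. }
  assert (Hf0 : forall a b, 0 <= f a b) by (intros; unfold f; nra).
  assert (Hf := Rsum_zero_inv d (fun a => Rsum d (fun b => f a b)) (fun a _ => Rsum_nonneg d _ (fun b _ => Hf0 a b)) Hs a Ha).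
  assert (Hf2 := Rsum_zero_inv d (fun b => f a b) (fun b _ => Hf0 a b) Hf b Hb).
  cbv beta in Hf2. unfold f, Cre, Cim in Hf2. assert (H1 : fst (E a b) = 0) by nra. assert (H2 : snd (E a b) = 0) by nra.
  unfold E in H1, H2. unfold Cadd, Cmul, RtoC in H1, H2; simpl in H1, H2.
  apply injective_projections; lra.
Qed.

Lemma parseval y z : inner d y z = Csum d (fun j => Cmul (inner d y (W j)) (inner d (W j) z)).
Proof.
  transitivity (Csum d (fun m => Csum d (fun b => Cmul (Cmul (Cconj (y m)) (z b)) (G m b)))).
  - unfold inner. apply Csum_ext; intros m Hm.
    rewrite <- (Csum_delta_l d m (fun b => Cmul (Cconj (y m)) (z b)) Hm).
    apply Csum_ext; intros b Hb. rewrite complete by auto. Csolve.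
  - unfold G, inner.
    transitivity (Csum d (fun m => Csum d (fun b => Csum d (fun j =>
       Cmul (Cmul (Cconj (y m)) (W j m)) (Cmul (Cconj (W j b)) (z b)))))).
    + apply Csum_ext; intros; apply Csum_ext; intros. rewrite <- Csum_mull. apply Csum_ext; intros; Csolve.
    + transitivity (Csum d (fun m => Csum d (fun j => Csum d (fun b =>
       Cmul (Cmul (Cconj (y m)) (W j m)) (Cmul (Cconj (W j b)) (z b)))))).
      * apply Csum_ext; intros; apply Csum_swap.
      * rewrite Csum_swap. apply Csum_ext; intros j _. rewrite <- Csum_mulr. apply Csum_ext; intros.
        apply Csum_mull.
Qed.
End Compl.

Lemma shift0 x l : shift x l 0 = x.
Proof. apply functional_extensionality; intros i. unfold shift. destruct (Nat.eqb i l); ring. Qed.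

Section D.
Variables (l : nat) (x : Pt).

Lemma pR_plus f g a b : partial_at f l x a -> partial_at g l x b -> partial_at (fun y => f y + g y) l x (a + b).
Proof. unfold partial_at; intros H1 H2. exact (derivable_pt_lim_plus _ _ _ _ _ H1 H2). Qed.
Lemma pR_minus f g a b : partial_at f l x a -> partial_at g l x b -> partial_at (fun y => f y - g y) l x (a - b).
Proof. unfold partial_at; intros H1 H2. exact (derivable_pt_lim_minus _ _ _ _ _ H1 H2). Qed.
Lemma pR_opp f a : partial_at f l x a -> partial_at (fun y => - f y) l x (- a).
Proof. unfold partial_at; intros H1. exact (derivable_pt_lim_opp _ _ _ H1). Qed.
Lemma pR_mult f g a b : partial_at f l x a -> partial_at g l x b -> partial_at (fun y => f y * g y) l x (a * g x + f x * b).
Proof. unfold partial_at; intros H1 H2. pose proof (derivable_pt_lim_mult _ _ _ _ _ H1 H2) as H.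
  cbv beta in H. rewrite shift0 in H. exact H. Qed.
Lemma pR_const c : partial_at (fun _ => c) l x 0.
Proof. unfold partial_at. apply derivable_pt_lim_const. Qed.
Lemma pR_eqv f a b : partial_at f l x a -> a = b -> partial_at f l x b.
Proof. intros H ->; auto. Qed.
Lemma pR_unique f a b : partial_at f l x a -> partial_at f l x b -> a = b.
Proof. unfold partial_at. apply uniqueness_limite. Qed.

Lemma pC_add f g a b : partialC_at f l x a -> partialC_at g l x b -> partialC_at (fun y => Cadd (f y) (g y)) l x (Cadd a b).
Proof. intros [H1 H2] [H3 H4]. split; [exact (pR_plus _ _ _ _ H1 H3) | exact (pR_plus _ _ _ _ H2 H4)]. Qed.
Lemma pC_mul f g a b : partialC_at f l x a -> partialC_at g l x b ->
  partialC_at (fun y => Cmul (f y) (g y)) l x (Cadd (Cmul a (g x)) (Cmul (f x) b)).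
Proof. intros [H1 H2] [H3 H4]. split.
  - eapply pR_eqv. exact (pR_minus _ _ _ _ (pR_mult _ _ _ _ H1 H3) (pR_mult _ _ _ _ H2 H4)).
    unfold Cre, Cim, Cadd, Cmul. simpl. ring.
  - eapply pR_eqv. exact (pR_plus _ _ _ _ (pR_mult _ _ _ _ H1 H4) (pR_mult _ _ _ _ H2 H3)).
    unfold Cre, Cim, Cadd, Cmul. simpl. ring. Qed.
Lemma pC_conj f a : partialC_at f l x a -> partialC_at (fun y => Cconj (f y)) l x (Cconj a).
Proof. intros [H1 H2]. split; [exact H1 | exact (pR_opp _ _ H2)]. Qed.
Lemma pC_RtoC h a : partial_at h l x a -> partialC_at (fun y => RtoC (h y)) l x (RtoC a).
Proof. intros H. split; [exact H | exact (pR_const 0)]. Qed.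
Lemma pC_const c : partialC_at (fun _ => c) l x Czero.
Proof. split; apply pR_const. Qed.
Lemma pC_sum n F F' : (forall i, (i < n)%nat -> partialC_at (F i) l x (F' i)) ->
  partialC_at (fun y => Csum n (fun i => F i y)) l x (Csum n F').
Proof. induction n; intros H; simpl. apply pC_const.
  apply (pC_add (fun y => Csum n (fun i => F i y)) (F n)). apply IHn; intros; apply H; lia. apply H; lia. Qed.
Lemma pC_unique f a b : partialC_at f l x a -> partialC_at f l x b -> a = b.
Proof. intros [H1 H2] [H3 H4]. apply injective_projections; [exact (pR_unique _ _ _ H1 H3) | exact (pR_unique _ _ _ H2 H4)]. Qed.
Lemma pC_eqv f a b : partialC_at f l x a -> a = b -> partialC_at f l x b.
Proof. intros H ->; auto. Qed.

Lemma pR_loc_const f dl : 0 < dl -> (forall t, Rabs t < dl -> f (shift x l t) = f x) -> partial_at f l x 0.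
Proof. intros Hd H. unfold partial_at, derivable_pt_lim. intros eps He.
  exists (mkposreal dl Hd). intros h Hh Hh2. simpl in Hh2.
  rewrite Rplus_0_l. rewrite H by auto. rewrite shift0.
  replace ((f x - f x) / h - 0) with 0 by (field; auto). rewrite Rabs_R0. auto. Qed.
End D.

Lemma sand_expand d y M z : inner d y (app d M z) = Csum d (fun a => Csum d (fun b => Cmul (Cconj (y a)) (Cmul (M a b) (z b)))).
Proof. unfold inner, app. apply Csum_ext; intros. rewrite Csum_mull. auto. Qed.
Lemma sand_ext d y M M' z : (forall a b, (a < d)%nat -> (b < d)%nat -> M a b = M' a b) -> inner d y (app d M z) = inner d y (app d M' z).
Proof. intros H. rewrite !sand_expand. apply Csum_ext; intros; apply Csum_ext; intros. rewrite H; auto. Qed.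
Lemma sand_sum d n y F z : inner d y (app d (fun a b => Csum n (fun k => F k a b)) z) = Csum n (fun k => inner d y (app d (F k) z)).
Proof. rewrite sand_expand.
  transitivity (Csum d (fun a => Csum d (fun b => Csum n (fun k => Cmul (Cconj (y a)) (Cmul (F k a b) (z b)))))).
  - apply Csum_ext; intros; apply Csum_ext; intros. rewrite <- Csum_mulr, <- Csum_mull. apply Csum_ext; intros; Csolve.
  - transitivity (Csum d (fun a => Csum n (fun k => Csum d (fun b => Cmul (Cconj (y a)) (Cmul (F k a b) (z b)))))).
    + apply Csum_ext; intros; apply Csum_swap.
    + rewrite Csum_swap. apply Csum_ext; intros. rewrite sand_expand. auto. Qed.
Lemma sand_add d y A B z : inner d y (app d (fun a b => Cadd (A a b) (B a b)) z) = Cadd (inner d y (app d A z)) (inner d y (app d B z)).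
Proof. rewrite !sand_expand, <- Csum_add. apply Csum_ext; intros. rewrite <- Csum_add. apply Csum_ext; intros; Csolve. Qed.
Lemma sand_scal d y c A z : inner d y (app d (fun a b => Cmul c (A a b)) z) = Cmul c (inner d y (app d A z)).
Proof. rewrite !sand_expand, <- Csum_mull. apply Csum_ext; intros. rewrite <- Csum_mull. apply Csum_ext; intros; Csolve. Qed.
Lemma sand_outer d y s t z : inner d y (app d (fun a b => Cmul (s a) (Cconj (t b))) z) = Cmul (inner d y s) (inner d t z).
Proof. rewrite sand_expand. unfold inner. rewrite <- Csum_mulr. apply Csum_ext; intros. rewrite <- Csum_mull. apply Csum_ext; intros; Csolve. Qed.
Lemma app_scal_v d A c u a : app d A (fun m => Cmul c (u m)) a = Cmul c (app d A u a).
Proof. unfold app. rewrite <- Csum_mull. apply Csum_ext; intros; Csolve. Qed.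

Lemma quad_ext p M M' v : (forall k l, (k < p)%nat -> (l < p)%nat -> M k l = M' k l) -> quad p M v = quad p M' v.
Proof. intros H. unfold quad. apply Rsum_ext; intros; apply Rsum_ext; intros. rewrite H; auto. Qed.
Lemma quad_add p M M' v : quad p (fun k l => M k l + M' k l) v = quad p M v + quad p M' v.
Proof. unfold quad. rewrite <- Rsum_add. apply Rsum_ext; intros. rewrite <- Rsum_add. apply Rsum_ext; intros. ring. Qed.
Lemma quad_scal p c M v : quad p (fun k l => c * M k l) v = c * quad p M v.
Proof. unfold quad. rewrite <- Rsum_mull. apply Rsum_ext; intros. rewrite <- Rsum_mull. apply Rsum_ext; intros. ring. Qed.
Lemma quad_sum p n F v : quad p (fun k l => Rsum n (fun i => F i k l)) v = Rsum n (fun i => quad p (F i) v).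
Proof. unfold quad.
  transitivity (Rsum p (fun k => Rsum n (fun i => Rsum p (fun l => v k * v l * F i k l)))).
  - apply Rsum_ext; intros. rewrite Rsum_swap. apply Rsum_ext; intros. rewrite <- Rsum_mull. apply Rsum_ext; intros; ring.
  - apply Rsum_swap. Qed.
Lemma quad_rank1 p c f v : quad p (fun k l => c * f k * f l) v = c * (Rsum p (fun k => v k * f k))^2.
Proof. unfold quad. idtac.
  transitivity (Rsum p (fun k => (c * (v k * f k)) * Rsum p (fun l => v l * f l))).
  - apply Rsum_ext; intros. rewrite <- Rsum_mull. apply Rsum_ext; intros; ring.
  - rewrite (Rsum_ext p _ (fun k => Rsum p (fun l => v l * f l) * (c * (v k * f k)))) by (intros; ring).
    rewrite Rsum_mull, Rsum_mull. ring. Qed.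
Lemma Rsum_lin p v a b c e g : (forall k, (k < p)%nat -> a k = c * b k + e * g k) ->
  Rsum p (fun k => v k * a k) = c * Rsum p (fun k => v k * b k) + e * Rsum p (fun k => v k * g k).
Proof. intros H. rewrite <- !Rsum_mull, <- Rsum_add. apply Rsum_ext; intros. rewrite H; auto; ring. Qed.
Lemma app_ext_v d A u u' a : (forall b, (b < d)%nat -> u b = u' b) -> app d A u a = app d A u' a.
Proof. intros H. unfold app. apply Csum_ext; intros. rewrite H; auto. Qed.
Lemma Rsum_lin2 p v s a b c e g : (forall k, (k < p)%nat -> s * a k = c * b k + e * g k) ->
  s * Rsum p (fun k => v k * a k) = c * Rsum p (fun k => v k * b k) + e * Rsum p (fun k => v k * g k).
Proof. intros H. rewrite <- !Rsum_mull, <- Rsum_add. apply Rsum_ext; intros.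
  transitivity (v i * (s * a i)). ring. rewrite H; auto; ring. Qed.
Lemma offdiag_bound s q X Y : 0 <= s -> q * q <= s * s -> / 2 * s * X = q * Y -> s * X ^ 2 <= 4 * s * Y ^ 2.
Proof. intros H0 Hq H. destruct H0 as [Hs | Hs].
  - assert (E : s * X = 2 * q * Y) by lra.
    apply (Rmult_le_reg_l s); auto.
    replace (s * (s * X ^ 2)) with ((s * X) ^ 2) by ring. rewrite E.
    assert (0 <= Y * Y) by nra. nra.
  - subst. lra. Qed.
Lemma Cre_scal r z : Cre (Cmul (RtoC r) z) = r * Cre z.
Proof. unfold Cre, Cmul, RtoC; simpl; ring. Qed.
Lemma delta_im i j : Cim (delta i j) = 0.
Proof. unfold delta; destruct (Nat.eqb i j); reflexivity. Qed.
Lemma delta_re_eq i : Cre (delta i i) = 1.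
Proof. unfold delta; rewrite Nat.eqb_refl; reflexivity. Qed.
Lemma delta_re_neq i j : i <> j -> Cre (delta i j) = 0.
Proof. intros H. unfold delta. destruct (Nat.eqb_spec i j); [contradiction|reflexivity]. Qed.

Theorem lemma6 (d p : nat) (Theta : Pt -> Prop)
  (P : nat -> Pt -> R) (w : nat -> Pt -> Vec)
  (hopen : is_open p Theta)
  (hPs : forall k, (k < d)%nat -> smooth p Theta (P k))
  (hP01 : forall k x, (k < d)%nat -> Theta x -> 0 <= P k x <= 1)
  (hsum : forall x, Theta x -> Rsum d (fun k => P k x) = 1)
  (hws : forall k m, (k < d)%nat -> (m < d)%nat -> smoothC p Theta (fun x => w k x m))
  (hon : forall x i j, Theta x -> (i < d)%nat -> (j < d)%nat ->
           inner d (w i x) (w j x) = if Nat.eqb i j then Cone else Czero)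
  (x : Pt) (hx : Theta x)
  (dP : nat -> nat -> R)
  (hdP : forall i k, (i < d)%nat -> (k < p)%nat -> partial_at (P i) k x (dP i k))
  (dw : nat -> nat -> Vec)
  (hdw : forall i k m, (i < d)%nat -> (k < p)%nat -> (m < d)%nat ->
           partialC_at (fun y => w i y m) k x (dw i k m))
  (lam : nat -> Mat)
  (hlh : forall k, (k < p)%nat -> hermitian d (lam k))
  (hsld : forall k i j, (k < p)%nat -> (i < d)%nat -> (j < d)%nat ->
     partialC_at (fun y => rho d P w y i j) k x
       (Cmul (RtoC (/ 2)) (Cadd (mmul d (rho d P w x) (lam k) i j)
                                (mmul d (lam k) (rho d P w x) i j))))
  (v : nat -> R) :
  quad p (HSLD d P w x lam) v <= quad p (CL d P w x dP dw) v.
Proof.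
  set (pr := fun n => P n x). set (W := fun n => w n x).
  assert (Hon : forall i j, (i < d)%nat -> (j < d)%nat -> inner d (W i) (W j) = delta i j)
    by (intros; unfold W, delta; apply hon; auto).
  assert (Hpos : forall i, (i < d)%nat -> 0 <= pr i) by (intros; apply hP01; auto).
  assert (HA2 : forall i j k, (i < d)%nat -> (j < d)%nat -> (k < p)%nat ->
     Cadd (inner d (dw i k) (W j)) (inner d (W i) (dw j k)) = Czero).
  { intros i j k Hi Hj Hk.
    destruct (hopen x hx) as [dl [Hdl Hnear]].
    assert (D1 : partialC_at (fun y => inner d (w i y) (w j y)) k x
       (Csum d (fun m => Cadd (Cmul (Cconj (dw i k m)) (w j x m)) (Cmul (Cconj (w i x m)) (dw j k m))))).
    { unfold inner. apply (pC_sum k x d (fun m y => Cmul (Cconj (w i y m)) (w j y m))). intros m Hm.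
      apply (pC_mul k x (fun y => Cconj (w i y m)) (fun y => w j y m)).
      apply pC_conj. apply hdw; auto. apply hdw; auto. }
    assert (D2 : partialC_at (fun y => inner d (w i y) (w j y)) k x Czero).
    { assert (Hc : forall t, Rabs t < dl -> inner d (w i (shift x k t)) (w j (shift x k t)) = inner d (w i x) (w j x)).
      { intros t Ht. rewrite !hon; auto. apply Hnear. intros m Hm. unfold shift.
        destruct (Nat.eqb m k).
        - replace (x m + t - x m) with t by ring; auto.
        - replace (x m - x m) with 0 by ring; rewrite Rabs_R0; lra. }
      split; eapply pR_loc_const; eauto; intros t Ht; simpl; rewrite Hc; auto. }
    pose proof (pC_unique _ _ _ _ _ D1 D2) as E. rewrite <- E. unfold inner.
    rewrite <- Csum_add. apply Csum_ext; intros; unfold W; Csolve. }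
  set (Dk := fun k a b => Csum d (fun n => Cadd (Cmul (RtoC (dP n k)) (Cmul (W n a) (Cconj (W n b))))
      (Cmul (RtoC (pr n)) (Cadd (Cmul (dw n k a) (Cconj (W n b))) (Cmul (W n a) (Cconj (dw n k b))))))).
  assert (HA3 : forall k a b, (k < p)%nat -> (a < d)%nat -> (b < d)%nat ->
     Dk k a b = Cmul (RtoC (/2)) (Cadd (mmul d (rh d pr W) (lam k) a b) (mmul d (lam k) (rh d pr W) a b))).
  { intros k a b Hk Ha Hb. eapply pC_unique. 2: apply hsld; auto.
    unfold rho, outer. eapply pC_eqv.
    apply (pC_sum k x d (fun n y => Cmul (RtoC (P n y)) (Cmul (w n y a) (Cconj (w n y b))))). intros n Hn.
    apply (pC_mul k x (fun y => RtoC (P n y)) (fun y => Cmul (w n y a) (Cconj (w n y b)))).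
    apply pC_RtoC. apply hdP; auto.
    apply (pC_mul k x (fun y => w n y a) (fun y => Cconj (w n y b))). apply hdw; auto. apply pC_conj, hdw; auto.
    unfold Dk. apply Csum_ext; intros. unfold W, pr. Csolve. }
  set (L := fun k i j => inner d (W i) (app d (lam k) (W j))).
  set (U := fun k i j => inner d (W i) (dw j k)).
  assert (HB : forall k i j, (k < p)%nat -> (i < d)%nat -> (j < d)%nat ->
    Cmul (RtoC (/2)) (Cmul (RtoC (pr i + pr j)) (L k i j)) =
    Cadd (Cmul (delta i j) (RtoC (dP i k))) (Cmul (RtoC (pr j - pr i)) (U k i j))).
  { intros k i j Hk Hi Hj.
    assert (S1 : inner d (W i) (app d (Dk k) (W j)) = Cmul (RtoC (/2)) (Cmul (RtoC (pr i + pr j)) (L k i j))).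
    { rewrite (sand_ext d _ _ (fun a b => Cmul (RtoC (/2)) (Cadd (mmul d (rh d pr W) (lam k) a b) (mmul d (lam k) (rh d pr W) a b)))) by (intros; apply HA3; auto).
      rewrite sand_scal, sand_add.
      assert (E1 : inner d (W i) (app d (mmul d (rh d pr W) (lam k)) (W j)) = Cmul (RtoC (pr i)) (L k i j)).
      { rewrite (inner_ext d (W i) (W i) _ (app d (rh d pr W) (app d (lam k) (W j)))) by (auto; intros; apply app_mmul).
        rewrite <- inner_app_herm by apply rh_herm.
        rewrite (inner_ext d _ (fun m => Cmul (RtoC (pr i)) (W i m)) (app d (lam k) (W j)) (app d (lam k) (W j))) by (auto; intros; apply app_rh_w; auto).
        rewrite inner_scal_l. reflexivity. }
      assert (E2 : inner d (W i) (app d (mmul d (lam k) (rh d pr W)) (W j)) = Cmul (RtoC (pr j)) (L k i j)).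
      { rewrite (inner_ext d (W i) (W i) _ (app d (lam k) (app d (rh d pr W) (W j)))) by (auto; intros; apply app_mmul).
        rewrite (inner_ext d (W i) (W i) _ (app d (lam k) (fun m => Cmul (RtoC (pr j)) (W j m)))).
        2: auto.
        2: { intros m _. apply app_ext_v; intros b Hb. apply app_rh_w; auto. }
        rewrite (inner_ext d (W i) (W i) _ (fun m => Cmul (RtoC (pr j)) (app d (lam k) (W j) m))) by (auto; intros; apply app_scal_v).
        rewrite inner_scal_r. reflexivity. }
      rewrite E1, E2. Csolve. }
    assert (S2 : inner d (W i) (app d (Dk k) (W j)) = Cadd (Cmul (delta i j) (RtoC (dP i k))) (Cmul (RtoC (pr j - pr i)) (U k i j))).
    { unfold Dk. rewrite sand_sum.
      rewrite (Csum_ext d _ (fun n => Cadd (Cmul (delta i n) (Cadd (Cmul (delta n j) (RtoC (dP n k))) (Cmul (RtoC (- pr n)) (U k n j))))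
            (Cmul (delta n j) (Cmul (RtoC (pr n)) (U k i n))))).
      - rewrite Csum_add, Csum_delta_l, Csum_delta_r by auto. Csolve.
      - intros n Hn. rewrite sand_add, sand_scal, sand_outer, sand_scal, sand_add, !sand_outer.
        rewrite (Hon i n), (Hon n j) by auto.
        assert (Hn2 : inner d (dw n k) (W j) = Cmul (RtoC (-1)) (U k n j)).
        { pose proof (HA2 n j k Hn Hj Hk) as H2. unfold U.
          pose proof (f_equal fst H2) as H3. pose proof (f_equal snd H2) as H4.
          unfold Cadd, Cmul, RtoC, Czero in *; simpl in *. apply injective_projections; simpl; lra. }
        rewrite Hn2. unfold U. Csolve. }
    rewrite <- S1, S2. reflexivity. }
  assert (SL : forall k i j, (k < p)%nat -> (i < d)%nat -> (j < d)%nat -> L k j i = Cconj (L k i j)).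
  { intros k i j Hk Hi Hj. unfold L. rewrite conj_inner. rewrite inner_app_herm by auto. reflexivity. }
  assert (SU : forall k i j, (k < p)%nat -> (i < d)%nat -> (j < d)%nat ->
     Cre (U k j i) = - Cre (U k i j) /\ Cim (U k j i) = Cim (U k i j)).
  { intros k i j Hk Hi Hj. pose proof (HA2 i j k Hi Hj Hk) as H2.
    rewrite <- (conj_inner d (W j) (dw i k)) in H2. fold (U k j i) in H2. fold (U k i j) in H2.
    pose proof (f_equal fst H2) as H3. pose proof (f_equal snd H2) as H4.
    unfold Cadd, Cconj, Czero, Cre, Cim in *; simpl in *. split; lra. }
  assert (HH : forall k l, (k < p)%nat -> (l < p)%nat -> HSLD d P w x lam k l =
     Rsum d (fun i => Rsum d (fun j => pr i * Cre (L k i j) * Cre (L l i j) + pr i * Cim (L k i j) * Cim (L l i j)))).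
  { intros k l Hk Hl. unfold HSLD.
    transitivity (Cre (mtrace d (mmul d (rh d pr W) (mmul d (lam k) (lam l))))).
    { f_equal. unfold mtrace. apply Csum_ext; intros; apply mmul_assoc. }
    rewrite trace_rh, Cre_sum. apply Rsum_ext; intros i Hi.
    rewrite (inner_ext d (W i) (W i) _ (app d (lam k) (app d (lam l) (W i)))) by (auto; intros; apply app_mmul).
    rewrite <- inner_app_herm by auto.
    rewrite (parseval d W Hon). rewrite Cre_scal, Cre_sum, <- Rsum_mull. apply Rsum_ext; intros j Hj.
    rewrite inner_app_herm by auto. fold (L k i j).
    rewrite <- (conj_inner d (app d (lam l) (W i)) (W j)). rewrite inner_app_herm by auto. fold (L l i j).
    unfold Cre, Cim, Cmul, Cconj; simpl; ring. }
  set (c := fun i => if Req_EM_T (pr i) 0 then 0 else / pr i).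
  assert (HC : forall k l, (k < p)%nat -> (l < p)%nat -> CL d P w x dP dw k l =
     Rsum d (fun i => c i * dP i k * dP i l) + 4 * Rsum d (fun j => Rsum j (fun i =>
        (pr i + pr j) * Cre (U k j i) * Cre (U l j i) + (pr i + pr j) * Cim (U k j i) * Cim (U l j i)))).
  { intros k l Hk Hl. unfold CL. f_equal.
    - apply Rsum_ext; intros i Hi. unfold c, pr. destruct (Req_EM_T (P i x) 0); ring.
    - f_equal. rewrite Cre_sum. apply Rsum_ext; intros j Hj. rewrite Cre_sum. apply Rsum_ext; intros i Hij.
      change (w j x) with (W j).
      rewrite <- (conj_inner d (W j) (dw i k)). fold (U k j i). fold (U l j i). fold (pr i). fold (pr j).
      unfold Cre, Cim, Cmul, Cconj, RtoC; simpl; ring. }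
  set (RL := fun i j => Rsum p (fun k => v k * Cre (L k i j))).
  set (IL := fun i j => Rsum p (fun k => v k * Cim (L k i j))).
  set (RU := fun i j => Rsum p (fun k => v k * Cre (U k i j))).
  set (IU := fun i j => Rsum p (fun k => v k * Cim (U k i j))).
  set (A := fun i => Rsum p (fun k => v k * dP i k)).
  assert (QH : quad p (HSLD d P w x lam) v = Rsum d (fun i => Rsum d (fun j => pr i * RL i j ^ 2 + pr i * IL i j ^ 2))).
  { rewrite (quad_ext _ _ _ _ HH), quad_sum. apply Rsum_ext; intros i Hi. rewrite quad_sum.
    apply Rsum_ext; intros j Hj. rewrite quad_add, !quad_rank1. reflexivity. }
  assert (QC : quad p (CL d P w x dP dw) v = Rsum d (fun i => c i * A i ^ 2) + 4 * Rsum d (fun j => Rsum j (fun i =>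
        (pr i + pr j) * RU j i ^ 2 + (pr i + pr j) * IU j i ^ 2))).
  { rewrite (quad_ext _ _ _ _ HC), quad_add, quad_sum, quad_scal, quad_sum. f_equal.
    - apply Rsum_ext; intros i Hi. rewrite quad_rank1. reflexivity.
    - f_equal. apply Rsum_ext; intros j Hj. rewrite quad_sum. apply Rsum_ext; intros i Hij.
      rewrite quad_add, !quad_rank1. reflexivity. }
  assert (R1 : forall i j, (i < d)%nat -> (j < d)%nat ->
     / 2 * (pr i + pr j) * RL i j = Cre (delta i j) * A i + (pr j - pr i) * RU i j).
  { intros i j Hi Hj. unfold RL, A, RU. apply Rsum_lin2. intros k Hk.
    pose proof (f_equal fst (HB k i j Hk Hi Hj)) as H. pose proof (delta_im i j) as H0.
    unfold Cmul, Cadd, RtoC, Cre, Cim in *; simpl in *. rewrite H0 in H. nra. }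
  assert (R2 : forall i j, (i < d)%nat -> (j < d)%nat ->
     / 2 * (pr i + pr j) * IL i j = 0 * RU i j + (pr j - pr i) * IU i j).
  { intros i j Hi Hj. unfold IL, IU, RU. apply Rsum_lin2. intros k Hk.
    pose proof (f_equal snd (HB k i j Hk Hi Hj)) as H. pose proof (delta_im i j) as H0.
    unfold Cmul, Cadd, RtoC, Cre, Cim in *; simpl in *. rewrite H0 in H. nra. }
  assert (SY : forall i j, (i < d)%nat -> (j < d)%nat ->
     RL j i = RL i j /\ IL j i = - IL i j /\ RU j i = - RU i j /\ IU j i = IU i j).
  { intros i j Hi Hj. split; [|split; [|split]].
    - replace (RL j i) with (1 * RL j i) by ring. unfold RL. rewrite (Rsum_lin2 p v 1 _ (fun k => Cre (L k i j)) 1 0 (fun k => Cre (L k i j))). ring.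
      intros k Hk. rewrite SL by auto. unfold Cre, Cconj; simpl; ring.
    - replace (IL j i) with (1 * IL j i) by ring. unfold IL. rewrite (Rsum_lin2 p v 1 _ (fun k => Cim (L k i j)) (-1) 0 (fun k => Cim (L k i j))). ring.
      intros k Hk. rewrite SL by auto. unfold Cim, Cconj; simpl; ring.
    - replace (RU j i) with (1 * RU j i) by ring. unfold RU. rewrite (Rsum_lin2 p v 1 _ (fun k => Cre (U k i j)) (-1) 0 (fun k => Cre (U k i j))). ring.
      intros k Hk. destruct (SU k i j Hk Hi Hj) as [E1 E2]. rewrite E1. ring.
    - replace (IU j i) with (1 * IU j i) by ring. unfold IU. rewrite (Rsum_lin2 p v 1 _ (fun k => Cim (U k i j)) 1 0 (fun k => Cim (U k i j))). ring.
      intros k Hk. destruct (SU k i j Hk Hi Hj) as [E1 E2]. rewrite E2. ring. }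
  rewrite QH, QC, Rsum_split. apply Rplus_le_compat.
  - apply Rsum_le; intros i Hi.
    pose proof (R1 i i Hi Hi) as E1. pose proof (R2 i i Hi Hi) as E2. rewrite delta_re_eq in E1.
    pose proof (Hpos i Hi) as Hp.
    unfold c. destruct (Req_EM_T (pr i) 0) as [e|ne].
    + rewrite e. lra.
    + assert (Hp' : 0 < pr i) by lra.
      assert (EI : IL i i = 0).
      { assert (pr i * IL i i = 0) by lra. destruct (Rmult_integral _ _ H); lra. }
      assert (ER : A i = pr i * RL i i) by lra.
      rewrite EI, ER. right. field. lra.
  - rewrite <- Rsum_mull. apply Rsum_le; intros j Hj. rewrite <- Rsum_mull. apply Rsum_le; intros i Hij.
    assert (Hi : (i < d)%nat) by lia.
    destruct (SY i j Hi Hj) as [Y1 [Y2 [Y3 Y4]]]. rewrite Y1, Y2, Y3, Y4.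
    pose proof (R1 i j Hi Hj) as E1. pose proof (R2 i j Hi Hj) as E2.
    rewrite delta_re_neq in E1 by lia.
    pose proof (Hpos i Hi). pose proof (Hpos j Hj).
    assert (Hs : 0 <= pr i + pr j) by lra.
    assert (Hq : (pr j - pr i) * (pr j - pr i) <= (pr i + pr j) * (pr i + pr j)) by nra.
    pose proof (offdiag_bound _ _ (RL i j) (RU i j) Hs Hq ltac:(lra)).
    pose proof (offdiag_bound _ _ (IL i j) (IU i j) Hs Hq ltac:(lra)).
    nra.
Qed.
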